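(* Let $G$ be a digraph that is not strongly connected, and suppose that $G$ has exactly one strongly connected subdigraph with at least one arc, and that this subdigraph is a directed cycle. Then the sequence of inner diameters $d(G),d(LG),d(L^2G),\dots$ is eventually periodic: there exist $k_0\ge0$ and $p\ge1$ such that $d(L^{k+p}G)=d(L^kG)$ for all $k\ge k_0$.
   Context: Digraphs are finite and may have loops and multiple arcs. The line digraph $LG$ has as vertex set the set of arcs of $G$, with an arc from $e$ to $f$ whenever the head of $e$ equals the tail of $f$; $L^0G=G$, $L^kG=L(L^{k-1}G)$. The inner diameter is $d(G)=\max\{\mathrm{dist}_G(u,v): \mathrm{dist}_G(u,v)<\infty\}$, where $\mathrm{dist}_G(u,v)$ is the length of a shortest directed walk from $u$ to $v$ ($\mathrm{dist}_G(u,u)=0$). A directed cycle is a digraph with vertices $v_0,\dots,v_{n-1}$ ($n\ge1$) and exactly the arcs $(v_i,v_{i+1\bmod n})$. *)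

(* Defs.v *)
From mathcomp Require Import all_boot.
Set Implicit Arguments. Unset Strict Implicit. Unset Printing Implicit Defensive.

Record digraph := Digraph {
  dvert : finType;
  darc : finType;
  dtail : darc -> dvert;
  dhead : darc -> dvert }.

Definition line_arc (G : digraph) : finType :=
  {p : darc G * darc G | dhead p.1 == dtail p.2}.

Definition line (G : digraph) : digraph :=
  @Digraph (darc G) (line_arc G)
    (fun q => (val q).1) (fun q => (val q).2).

Fixpoint iter_line (k : nat) (G : digraph) : digraph :=
  match k with 0 => G | k'.+1 => line (iter_line k' G) end.

Definition adj_in (G : digraph) (B : {set darc G}) : rel (dvert G) :=
  fun x y => [exists a in B, (dtail a == x) && (dhead a == y)].

Definition adj (G : digraph) : rel (dvert G) := adj_in [set: darc G].

Fixpoint reach (G : digraph) (n : nat) (u : dvert G) : {set dvert G} :=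
  match n with
  | 0 => [set u]
  | n'.+1 => [set y | [exists x in reach n' u, adj x y]]
  end.

(* dist u v = length of a shortest directed walk from u to v; meaningful when
   v is reachable from u (a shortest walk then has length < #|V|). *)
Definition dist (G : digraph) (u v : dvert G) : nat :=
  find (fun n => v \in reach n u) (iota 0 #|dvert G|).

Definition inner_diam (G : digraph) : nat :=
  \max_(u : dvert G) \max_(v : dvert G | connect (@adj G) u v) dist u v.

Definition strongly_connected (G : digraph) : Prop :=
  forall u v : dvert G, connect (@adj G) u v.

Definition subdigraph (G : digraph) (S : {set dvert G}) (B : {set darc G}) : Prop :=
  forall a, a \in B -> (dtail a \in S) && (dhead a \in S).

Definition sub_strongly_connected (G : digraph) (S : {set dvert G})
  (B : {set darc G}) : Prop :=
  forall x y, x \in S -> y \in S -> connect (adj_in B) x y.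

Definition is_dicycle (G : digraph) (S : {set dvert G}) (B : {set darc G}) : Prop :=
  exists (vs : seq (dvert G)) (es : seq (darc G)),
    [/\ 0 < size vs, size es = size vs, uniq vs & uniq es] /\
    [/\ S = [set x in vs], B = [set a in es] &
        forall i (x0 : dvert G) (a0 : darc G), i < size vs ->
          dtail (nth a0 es i) = nth x0 vs i /\
          dhead (nth a0 es i) = nth x0 vs (i.+1 %% size vs)].

Definition nontriv_scc_sub (G : digraph) (S : {set dvert G}) (B : {set darc G}) : Prop :=
  [/\ subdigraph S B, sub_strongly_connected S B & B != set0].

(* Main.v *)
Require Import Defs.
From mathcomp Require Import all_boot zify.
Set Implicit Arguments. Unset Strict Implicit. Unset Printing Implicit Defensive.

Record isoW (H H' : digraph) := IsoW {
  fV : dvert H -> dvert H'; fV' : dvert H' -> dvert H;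
  fA : darc H -> darc H'; fA' : darc H' -> darc H;
  fVK : cancel fV fV'; fVK' : cancel fV' fV;
  fAK : cancel fA fA'; fAK' : cancel fA' fA;
  fT : forall a, dtail (fA a) = fV (dtail a);
  fH : forall a, dhead (fA a) = fV (dhead a) }.

Definition iso H H' := inhabited (isoW H H').

Lemma iso_sym H H' : iso H H' -> iso H' H.
Proof.
case=> [[f f' g g' K1 K2 K3 K4 T1 H1]]; constructor.
apply: (@IsoW H' H f' f g' g K2 K1 K4 K3).
- by move=> a; apply: (can_inj K1); rewrite K2 -T1 K4.
- by move=> a; apply: (can_inj K1); rewrite K2 -H1 K4.
Qed.

Lemma iso_trans H1 H2 H3 : iso H1 H2 -> iso H2 H3 -> iso H1 H3.
Proof.
case=> [[f f' g g' K1 K2 K3 K4 T1 E1]] [[h h' k k' L1 L2 L3 L4 T2 E2]].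
constructor; apply: (@IsoW H1 H3 (h \o f) (f' \o h') (k \o g) (g' \o k')).
- by move=> x /=; rewrite L1 K1.
- by move=> x /=; rewrite K2 L2.
- by move=> x /=; rewrite L3 K3.
- by move=> x /=; rewrite K4 L4.
- by move=> a /=; rewrite T2 T1.
- by move=> a /=; rewrite E2 E1.
Qed.

Section LineIso.
Variables (H H' : digraph) (i : isoW H H').

Lemma lmap_pf (q : line_arc H) :
  dhead (fA i (val q).1) == dtail (fA i (val q).2).
Proof. by rewrite fT fH (eqP (valP q)). Qed.

Definition lmap (q : line_arc H) : line_arc H' :=
  exist _ (fA i (val q).1, fA i (val q).2) (lmap_pf q).

Definition isym : isoW H' H.
Proof.
apply: (@IsoW H' H (fV' i) (fV i) (fA' i) (fA i) (fVK' i) (fVK i) (fAK' i) (fAK i)).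
- by move=> a; apply: (can_inj (fVK i)); rewrite fVK' -fT fAK'.
- by move=> a; apply: (can_inj (fVK i)); rewrite fVK' -fH fAK'.
Defined.

Lemma lmap_pf' (q : line_arc H') :
  dhead (fA' i (val q).1) == dtail (fA' i (val q).2).
Proof. by rewrite (fT isym) (fH isym) (eqP (valP q)). Qed.

Definition lmap' (q : line_arc H') : line_arc H :=
  exist _ (fA' i (val q).1, fA' i (val q).2) (lmap_pf' q).

Lemma iso_line_W : iso (line H) (line H').
Proof.
constructor; apply: (@IsoW (line H) (line H') (fA i) (fA' i) lmap lmap' (fAK i) (fAK' i)).
- by move=> q; apply: val_inj => /=; rewrite !fAK; case: (val q).
- by move=> q; apply: val_inj => /=; rewrite !fAK'; case: (val q).
- by [].
- by [].
Qed.
End LineIso.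

Lemma iso_line H H' : iso H H' -> iso (line H) (line H').
Proof. by case=> i; apply: iso_line_W i. Qed.


Lemma adj_iso (H H' : digraph) (i : isoW H H') u v : adj u v -> adj (fV i u) (fV i v).
Proof.
case/existsP=> a /andP[_ /andP[/eqP Ht /eqP Hh]].
apply/existsP; exists (fA i a); rewrite in_setT /= fT fH Ht Hh !eqxx //.
Qed.

Lemma adj_isoE (H H' : digraph) (i : isoW H H') u v : adj (fV i u) (fV i v) = adj u v.
Proof.
apply/idP/idP; last by move=> h; apply: adj_iso.
by move/(adj_iso (isym i)); rewrite /= !fVK.
Qed.

Lemma reach_isoE (H H' : digraph) (i : isoW H H') n u v : (fV i v \in reach n (fV i u)) = (v \in reach n u).
Proof.
elim: n v => [|n IH] v /=; first by rewrite !in_set1 (inj_eq (can_inj (fVK i))).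
rewrite !in_set; apply/existsP/existsP => [[x /andP[Hx Ha]]|[x /andP[Hx Ha]]].
- exists (fV' i x); rewrite -(IH) -(adj_isoE i) !fVK' Hx Ha //.
- exists (fV i x); rewrite IH (adj_isoE i) Hx Ha //.
Qed.

Lemma connect_iso (H H' : digraph) (i : isoW H H') u v : connect (@adj H) u v -> connect (@adj H') (fV i u) (fV i v).
Proof.
case/connectP=> p Hp ->; elim: p u Hp => [|x p IH] u /=; first by rewrite connect0.
case/andP=> Ha Hp; apply: connect_trans (connect1 (adj_iso i Ha)) (IH _ Hp).
Qed.

Lemma connect_isoE (H H' : digraph) (i : isoW H H') u v : connect (@adj H') (fV i u) (fV i v) = connect (@adj H) u v.
Proof.
apply/idP/idP; last by move=> h; apply: connect_iso.
by move/(connect_iso (isym i)); rewrite /= !fVK.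
Qed.

Lemma card_isoV (H H' : digraph) (i : isoW H H') : #|dvert H| = #|dvert H'|.
Proof. apply: bij_eq_card; exists (fV' i); [exact: fVK|exact: fVK']. Qed.

Lemma dist_isoE (H H' : digraph) (i : isoW H H') u v : dist (fV i u) (fV i v) = dist u v.
Proof.
rewrite /dist (card_isoV i); apply: eq_find => n; exact: (reach_isoE i).
Qed.

Lemma diam_iso (H H' : digraph) (i : isoW H H') : inner_diam H' = inner_diam H.
Proof.
rewrite /inner_diam (reindex (fV i)); last first.
  by apply: onW_bij; exists (fV' i); [exact: fVK|exact: fVK'].
apply: eq_bigr => u _.
rewrite (reindex (fV i)); last first.
  by apply: onW_bij; exists (fV' i); [exact: fVK|exact: fVK'].
apply: eq_big => v; first by rewrite (connect_isoE i).
by move=> _; rewrite (dist_isoE i).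
Qed.


Lemma iso_diam H H' : iso H H' -> inner_diam H = inner_diam H'.
Proof. by case=> i; rewrite (diam_iso i). Qed.

Lemma iso_iter G k k' : iso (iter_line k G) (iter_line k' G) ->
  forall j, iso (iter_line (k + j) G) (iter_line (k' + j) G).
Proof.
move=> Hi; elim=> [|j IH]; first by rewrite !addn0.
by rewrite !addnS /=; apply: iso_line.
Qed.

Fixpoint allseqs (X : eqType) (n : nat) (P : seq X) : seq (seq X) :=
  if n is n'.+1 then [::] :: [seq x :: l | x <- P, l <- allseqs n' P] else [:: [::]].

Lemma mem_allseqs (X : eqType) (P : seq X) n l :
  size l <= n -> all (mem P) l -> l \in allseqs n P.
Proof.
elim: n l => [|n IH] [|x l] //= Hs /andP[Hx Hl].
by rewrite in_cons; apply/orP; right; apply: allpairs_f => //; apply: IH.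
Qed.

Lemma pigeon (X : eqType) (f : nat -> X) (Cs : seq X) :
  (forall k, f k \in Cs) -> exists i j, i < j /\ f i = f j.
Proof.
move=> HC.
have: ~~ uniq (map f (iota 0 (size Cs).+1)).
  apply/negP => U.
  have S : {subset map f (iota 0 (size Cs).+1) <= Cs}.
    by move=> x /mapP[k _ ->].
  by have := uniq_leq_size U S; rewrite size_map size_iota ltnn.
case/(uniqPn (f 0)) => i [j [Hij Hj E]].
rewrite size_map size_iota in Hj.
exists i, j; split=> //.
by move: E; rewrite !(nth_map 0) ?size_iota ?(ltn_trans Hij) // !nth_iota ?(ltn_trans Hij).
Qed.

Definition code (H : digraph) : nat * seq (nat * nat) :=
  (#|dvert H|, [seq (nat_of_ord (enum_rank (dtail a)), nat_of_ord (enum_rank (dhead a))) | a <- enum (darc H)]).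

Definition codes (N : nat) := [seq (n, l) | n <- iota 0 N.+1,
   l <- allseqs N [seq (x, y) | x <- iota 0 N, y <- iota 0 N]].

Lemma code_in N H : #|dvert H| <= N -> #|darc H| <= N -> code H \in codes N.
Proof.
move=> HV HA; apply: allpairs_f; first by rewrite mem_iota.
apply: mem_allseqs; first by rewrite size_map (leq_trans _ HA) // cardT.
apply/allP=> p /mapP[a _ ->]; apply: allpairs_f; rewrite mem_iota /=.
  exact: leq_trans (ltn_ord _) HV.
exact: leq_trans (ltn_ord _) HV.
Qed.

Lemma code_iso H H' : code H = code H' -> iso H H'.
Proof.
case=> eV E.
have eA : #|darc H| = #|darc H'|.
  rewrite !cardT; move/(congr1 size): E; by rewrite !size_map.
pose f := fun v : dvert H => enum_val (cast_ord eV (enum_rank v)).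
pose f' := fun v : dvert H' => enum_val (cast_ord (esym eV) (enum_rank v)).
pose g := fun v : darc H => enum_val (cast_ord eA (enum_rank v)).
pose g' := fun v : darc H' => enum_val (cast_ord (esym eA) (enum_rank v)).
have Kf : cancel f f' by move=> x; rewrite /f /f' enum_valK cast_ordK enum_rankK.
have Kf' : cancel f' f by move=> x; rewrite /f /f' enum_valK cast_ordKV enum_rankK.
have Kg : cancel g g' by move=> x; rewrite /g /g' enum_valK cast_ordK enum_rankK.
have Kg' : cancel g' g by move=> x; rewrite /g /g' enum_valK cast_ordKV enum_rankK.
have key : forall a, (nat_of_ord (enum_rank (dtail (g a))), nat_of_ord (enum_rank (dhead (g a))))
    = (nat_of_ord (enum_rank (dtail a)), nat_of_ord (enum_rank (dhead a))).
  move=> a.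
  have r1 : enum_rank a < size (enum (darc H)) by rewrite (esym (cardT _)).
  have r2 : enum_rank a < size (enum (darc H')) by rewrite (esym (cardT _)) -eA.
  move/(congr1 (nth (0,0) ^~ (enum_rank a))): E.
  rewrite (nth_map a) // (nth_map (g a)) // nth_enum_rank => ->.
  have Eg : g a = nth (g a) (enum (darc H')) (enum_rank a).
    by rewrite {1}/g (enum_val_nth (g a)).
  by rewrite -Eg.
constructor; apply: (@IsoW H H' f f' g g' Kf Kf' Kg Kg').
- move=> a; apply: enum_rank_inj; rewrite /f enum_valK; apply: val_inj => /=.
  by case: (key a).
- move=> a; apply: enum_rank_inj; rewrite /f enum_valK; apply: val_inj => /=.
  by case: (key a).
Qed.

Section Walks.
Variable G : digraph.

Fixpoint hd (k : nat) : dvert (iter_line k.+1 G) -> darc G :=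
  match k return dvert (iter_line k.+1 G) -> darc G with
  | 0 => fun a => a
  | k'.+1 => fun q => @hd k' (val q).1
  end.

Fixpoint W (k : nat) : dvert (iter_line k.+1 G) -> seq (darc G) :=
  match k return dvert (iter_line k.+1 G) -> seq (darc G) with
  | 0 => fun a => [:: a]
  | k'.+1 => fun q => @hd k' (val q).1 :: @W k' (val q).2
  end.

Arguments hd : clear implicits.
Arguments W : clear implicits.
Definition ar (a b : darc G) := dhead a == dtail b.

Lemma size_W k v : size (W k v) = k.+1.
Proof. by elim: k v => [|k IH] v //=; rewrite IH. Qed.

Lemma W_hd k v : W k v = hd k v :: behead (W k v).
Proof. by case: k v. Qed.

Lemma R_hd k (x : darc (iter_line k.+1 G)) : ar (hd k (dtail x)) (hd k (dhead x)).
Proof.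
elim: k x => [|k IH] x; first exact: (valP x).
have E := eqP (valP x); change (ar (hd k (dtail (sval x).1)) (hd k (dtail (sval x).2))); rewrite -E; exact: IH.
Qed.

Lemma sorted_W k v : sorted ar (W k v).
Proof.
elim: k v => [|k IH] v //=.
rewrite W_hd /=; move: (IH (val v).2); rewrite W_hd /= => ->.
by rewrite andbT; apply: (R_hd v).
Qed.

Lemma W_tail k (x : darc (iter_line k.+1 G)) :
  W k (dtail x) = hd k (dtail x) :: take k (W k (dhead x)).
Proof.
elim: k x => [|k IH] x //=.
have E := eqP (valP x).
change (hd k (dtail (sval x).1) :: W k (dhead (sval x).1) = hd k (dtail (sval x).1) :: hd k (dtail (sval x).2) :: take k (W k (dhead (sval x).2))).
by rewrite E IH.
Qed.

Lemma W_inj k : injective (W k).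
Proof.
elim: k => [|k IH] x y /=; first by case.
case=> E1 E2.
have h2 : (val x).2 = (val y).2 by apply: IH.
have h1 : (val x).1 = (val y).1.
  apply: IH.
  have T1 := W_tail (x : darc (iter_line k.+1 G)).
  have T2 := W_tail (y : darc (iter_line k.+1 G)).
  simpl in T1, T2; rewrite T1 T2 h2 E1 //.
apply: val_inj; move: h1 h2; case: (val x) => a b; case: (val y) => c d /= -> -> //.
Qed.
End Walks.

Section Hyp.
Variable G : digraph.
Variables (S : {set dvert G}) (B : {set darc G}).
Hypothesis HS : nontriv_scc_sub S B.
Hypothesis HC : is_dicycle S B.
Hypothesis HU : forall S' B', nontriv_scc_sub S' B' -> S' = S /\ B' = B.

Lemma adj_arc (a : darc G) : adj (dtail a) (dhead a).
Proof. by apply/existsP; exists a; rewrite in_setT !eqxx. Qed.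

Lemma adjP (x z : dvert G) : adj x z -> exists a, dtail a = x /\ dhead a = z.
Proof. by case/existsP=> a /andP[_ /andP[/eqP ? /eqP ?]]; exists a. Qed.

Lemma K (y : darc G) : connect (@adj G) (dhead y) (dtail y) -> y \in B.
Proof.
move=> Hc; set u := dtail y.
pose C := [set v | connect (@adj G) u v && connect (@adj G) v u].
pose D := [set a | (dtail a \in C) && (dhead a \in C)].
have claim : forall p x, x \in C -> path (@adj G) x p -> last x p \in C ->
    connect (adj_in D) x (last x p).
  elim=> [|v p IH] x Hx /=; first by rewrite connect0.
  case/andP=> Ha Hp Hl.
  have Hv : v \in C.
    move: Hx; rewrite !inE => /andP[Hux Hxu]; apply/andP; split.
      exact: connect_trans Hux (connect1 Ha).
    move: Hl; rewrite inE => /andP[_ Hlu].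
    apply: connect_trans Hlu; apply: (path_connect Hp); exact: mem_last.
  apply: connect_trans (IH _ Hv Hp Hl); apply: connect1.
  have [a [Ht Hh]] := adjP Ha.
  by apply/existsP; exists a; rewrite inE Ht Hh Hx Hv !eqxx.
have HD : nontriv_scc_sub C D.
  split.
  - by move=> a; rewrite inE.
  - move=> x z Hx Hz.
    have Hxz : connect (@adj G) x z.
      move: Hx Hz; rewrite !inE => /andP[_ Hxu] /andP[Huz _].
      exact: connect_trans Hxu Huz.
    case/connectP: Hxz => p Hp Ez; rewrite Ez; apply: claim => //.
    by rewrite -Ez.
  - apply/set0Pn; exists y; rewrite !inE connect0 /= -/u.
    by rewrite (connect1 (adj_arc y)) Hc.
have [_ EB] := HU HD.
rewrite -EB !inE connect0 /= -/u.
by rewrite (connect1 (adj_arc y)) Hc.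
Qed.

Lemma U (a a' : darc G) : a \in B -> a' \in B -> dtail a = dtail a' -> a = a'.
Proof.
case: HC => vs [es [[Hsz Hsize Uvs Ues] [_ EB Hnth]]].
rewrite EB !inE => Ha Ha' Et.
have Hi : index a es < size vs by rewrite -Hsize index_mem.
have Hj : index a' es < size vs by rewrite -Hsize index_mem.
have [T1 _] := Hnth _ (dtail a) a Hi.
have [T2 _] := Hnth _ (dtail a) a Hj.
rewrite !nth_index // in T1 T2.
have : nth (dtail a) vs (index a es) = nth (dtail a) vs (index a' es) by rewrite -T1 -T2.
move/eqP; rewrite nth_uniq // => /eqP Eij.
by rewrite -(nth_index a Ha) -(nth_index a Ha') Eij.
Qed.

Lemma WC (a b : darc G) s : sorted (ar (G:=G)) (a :: s) -> b \in s ->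
  connect (@adj G) (dhead a) (dtail b).
Proof.
elim: s a => [|c s IH] a //= /andP[/eqP Hac Hp].
rewrite in_cons => /orP[/eqP ->|Hb]; first by rewrite Hac connect0.
rewrite Hac; apply: connect_trans (connect1 (adj_arc c)) _.
exact: IH.
Qed.

Lemma Sconn (x z : dvert G) : x \in S -> z \in S -> connect (@adj G) x z.
Proof.
case: HS => _ Hsc _ Hx Hz; apply: connect_sub (Hsc _ _ Hx Hz).
move=> u v /existsP[a /andP[_ /andP[/eqP <- /eqP <-]]]; exact: connect1 (adj_arc a).
Qed.

Lemma contig (x y b : darc G) r : sorted (ar (G:=G)) (x :: y :: r) ->
  x \in B -> y \notin B -> b \in r -> b \notin B.
Proof.
move=> Hs Hx Hy Hb; apply/negP => HbB; move/negP: Hy; apply.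
apply: K.
have Hs' : sorted (ar (G:=G)) (y :: r) by case/andP: Hs.
have H1 := WC Hs' Hb.
case: HS => Hsub _ _.
have Sb : dtail b \in S by case/andP: (Hsub _ HbB).
have Sx : dhead x \in S by case/andP: (Hsub _ Hx).
have Exy : dhead x = dtail y by case/andP: Hs => /eqP.
apply: connect_trans H1 _; rewrite -Exy; exact: Sconn.
Qed.

Definition nB := fun a : darc G => a \notin B.
Definition iB := fun a : darc G => a \in B.

Definition codew (w : seq (darc G)) :=
  ((filter nB w, find iB w), ohead (filter iB w)).

Lemma all_nB x y r : sorted (ar (G:=G)) (x :: y :: r) ->
  x \in B -> y \notin B -> filter nB (y :: r) = y :: r.
Proof.
move=> Hs Hx Hy; apply/all_filterP; rewrite /= {1}/nB Hy /=.
by apply/allP => b Hb; apply: (contig Hs).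
Qed.

Lemma codew_inj w w' : sorted (ar (G:=G)) w -> sorted (ar (G:=G)) w' ->
  size w = size w' -> codew w = codew w' -> w = w'.
Proof.
elim: w w' => [|x w1 IH] [|x' w1'] //= Hs Hs' [Hsz].
have Hs1 : sorted (ar (G:=G)) w1 by apply: path_sorted Hs.
have Hs1' : sorted (ar (G:=G)) w1' by apply: path_sorted Hs'.
rewrite /codew /= /nB /iB.
case: (boolP (x \in B)) => Hx; case: (boolP (x' \in B)) => Hx' //=.
- case=> EL Exx'; subst x'.
  have EL' : filter nB w1 = filter nB w1' := EL.
  clear EL; move: w1 w1' IH Hs Hs' Hsz EL' Hs1 Hs1' => [|y r] [|y' r'] //= IH Hs Hs' [Hsz] EL Hs1 Hs1'.
  case: (boolP (y \in B)) => Hy; case: (boolP (y' \in B)) => Hy'.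
  + have Ey : y = y'.
      apply: U => //; case/andP: Hs => /eqP <- _; by case/andP: Hs' => /eqP <- _.
    subst y'; congr (_ :: _); apply: IH => //; first by rewrite /= Hsz.
    by rewrite /codew /= /nB /iB Hy /=; move: EL; rewrite /= /nB Hy /= => ->.
  + exfalso; move: EL; rewrite /nB Hy Hy' /=.
    have -> : [seq x <- r' | x \notin B] = r'.
      by apply/all_filterP/allP => b Hb; apply: (contig Hs' Hx Hy').
    move=> EL; have := count_size nB r; rewrite -size_filter /nB EL /= Hsz.
    by rewrite ltnn.
  + exfalso; move: EL; rewrite /nB Hy Hy' /=.
    have -> : [seq x <- r | x \notin B] = r.
      by apply/all_filterP/allP => b Hb; apply: (contig Hs Hx Hy).
    move=> EL; have := count_size nB r'; rewrite -size_filter /nB -EL /= -Hsz.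
    by rewrite ltnn.
  + move: EL; rewrite /nB Hy Hy' /=.
    have -> : [seq x <- r | x \notin B] = r.
      by apply/all_filterP/allP => b Hb; apply: (contig Hs Hx Hy).
    have -> : [seq x <- r' | x \notin B] = r'.
      by apply/all_filterP/allP => b Hb; apply: (contig Hs' Hx Hy').
    by move=> ->.
- case=> Ex EL Ef Eo; subst x'; congr (_ :: _); apply: IH => //.
  by rewrite /codew /nB /iB EL Ef Eo.
Qed.
Lemma uniq_nonB w : sorted (ar (G:=G)) w -> uniq (filter nB w).
Proof.
elim: w => [|a w IH] //= Hs.
have Hw : sorted (ar (G:=G)) w by apply: path_sorted Hs.
case: (boolP (nB a)) => Ha /=; last exact: IH.
rewrite IH // andbT mem_filter Ha /=; apply/negP => Haw.
by move/negP: Ha; apply; apply: K; apply: (WC Hs).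
Qed.

Lemma find_le w : find iB w <= size (filter nB w).
Proof.
elim: w => [|a w IH] //=; rewrite /nB /iB.
by case: (a \in B).
Qed.

Definition Cw := [seq (p, o) | p <- [seq (L, i) | L <- allseqs #|darc G| (enum (darc G)),
   i <- iota 0 (#|darc G|).+1], o <- None :: map Some (enum (darc G))].

Lemma codew_in w : sorted (ar (G:=G)) w -> codew w \in Cw.
Proof.
move=> Hs.
have HL : size (filter nB w) <= #|darc G|.
  rewrite cardT; apply: uniq_leq_size; first exact: uniq_nonB.
  by move=> a _; rewrite mem_enum.
apply: allpairs_f.
  apply: allpairs_f.
    apply: mem_allseqs => //; apply/allP => a _; change (a \in enum (darc G)); by rewrite mem_enum.
  by rewrite mem_iota /= ltnS (leq_trans (find_le w) HL).
case: (filter iB w) => [|a s] /=; first exact: mem_head.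
by rewrite in_cons /=; apply: map_f; rewrite mem_enum.
Qed.

Lemma card_bound k : #|dvert (iter_line k.+1 G)| <= size Cw.
Proof.
rewrite cardT -(size_map (fun v => codew (@W G k v))).
apply: uniq_leq_size.
  rewrite map_inj_uniq ?enum_uniq // => u v E.
  apply: W_inj; apply: codew_inj => //; try exact: sorted_W.
  by rewrite !size_W.
by move=> c /mapP[v _ ->]; apply: codew_in; exact: sorted_W.
Qed.
End Hyp.

Theorem proposition3p1 (G : digraph) :
  ~ strongly_connected G ->
  (exists (S : {set dvert G}) (B : {set darc G}), [/\ nontriv_scc_sub S B, is_dicycle S B &
     forall (S' : {set dvert G}) (B' : {set darc G}), nontriv_scc_sub S' B' -> S' = S /\ B' = B]) ->
  exists k0 p, 0 < p /\
    forall k, k0 <= k -> inner_diam (iter_line (k + p) G) = inner_diam (iter_line k G).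
Proof.
move=> _ [S [B [HS HC HU]]].
set N := maxn #|dvert G| (size (Cw G)).
have bnd : forall k, #|dvert (iter_line k G)| <= N.
  case=> [|k]; first exact: leq_maxl.
  exact: leq_trans (card_bound HS HC HU k) (leq_maxr _ _).
have [i [j [Hij E]]] := @pigeon _ (fun k => code (iter_line k G)) (codes N)
  (fun k => code_in (bnd k) (bnd k.+1)).
exists i, (j - i); split; first by rewrite subn_gt0.
move=> k Hk.
have := iso_iter (code_iso E) (k - i).
have -> : i + (k - i) = k by lia.
have -> : j + (k - i) = k + (j - i) by lia.
by move/iso_diam.
Qed.
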